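(* Let $n\ge 2$ and $A=(A_1,\dots,A_n)\in V_n$. If $A$ is similar to an upper triangular $n$-matrix, then $\sigma_{jk}(A)=0$ for all distinct $1\le j,k\le n$.
   Context: $V_n=(M_{2\times2}(\mathbb{C}))^{\times n}$ with $GL(2,\mathbb{C})$ acting by simultaneous conjugation $g\cdot A=(gA_1g^{-1},\dots,gA_ng^{-1})$; two elements are similar if they lie in the same orbit. $A$ is an upper triangular $n$-matrix if every $A_j$ is upper triangular. With $t_j=\mathsf{tr}(A_j)$, $t_{jk}=\mathsf{tr}(A_jA_k)$, define $\tau_{jk}=t_{jk}-\tfrac12 t_jt_k$ and $\sigma_{jk}=\tau_{jk}^2-\tau_{jj}\tau_{kk}$. *)

(* Defs.v *)
From mathcomp Require Import all_boot all_order all_algebra.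
From mathcomp Require Import complex.
From mathcomp Require Import Rstruct.
Set Implicit Arguments. Unset Strict Implicit. Unset Printing Implicit Defensive.
Import GRing.Theory Num.Theory.
Local Open Scope ring_scope.

Definition CC : Type := (complex Rdefinitions.R).

(* V_n : n-tuples of 2x2 complex matrices, indexed by 'I_n (index j <-> j+1). *)
Definition Vn (n : nat) := 'I_n -> 'M[CC]_2.

Definition conj_tuple n (g : 'M[CC]_2) (A : Vn n) : Vn n :=
  fun j => g *m A j *m invmx g.

Definition similar_tuple n (A B : Vn n) : Prop :=
  exists g : 'M[CC]_2, g \in unitmx /\ B = conj_tuple g A.

Definition upper_triangular_mx (M : 'M[CC]_2) : Prop :=
  forall i j : 'I_2, (j < i)%N -> M i j = 0.

Definition upper_triangular_tuple n (A : Vn n) : Prop :=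
  forall j, upper_triangular_mx (A j).

Definition t1 n (A : Vn n) (j : 'I_n) : CC := \tr (A j).
Definition t2 n (A : Vn n) (j k : 'I_n) : CC := \tr (A j *m A k).
Definition tauA n (A : Vn n) (j k : 'I_n) : CC :=
  t2 A j k - 2^-1 * t1 A j * t1 A k.
Definition sigmaA n (A : Vn n) (j k : 'I_n) : CC :=
  tauA A j k ^+ 2 - tauA A j j * tauA A k k.

(* Main.v *)
Require Import Defs.
From mathcomp Require Import all_boot all_order all_algebra.
From mathcomp Require Import complex Rstruct.
From mathcomp Require Import ring.
Import GRing.Theory Num.Theory.
Local Open Scope ring_scope.

Lemma tr_conj (g M : 'M[CC]_2) : g \in unitmx -> \tr (g *m M *m invmx g) = \tr M.
Proof. by move=> gu; rewrite mxtrace_mulC mulmxA mulVmx // mul1mx. Qed.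

Lemma sigma_inv n (g : 'M[CC]_2) (A : Vn n) j k : g \in unitmx ->
  sigmaA (conj_tuple g A) j k = sigmaA A j k.
Proof.
move=> gu.
have h1 : forall i, t1 (conj_tuple g A) i = t1 A i.
  by move=> i; rewrite /t1 /conj_tuple tr_conj.
have h2 : forall i l, t2 (conj_tuple g A) i l = t2 A i l.
  move=> i l; rewrite /t2 /conj_tuple.
  rewrite !mulmxA -[g *m A i *m invmx g *m g](mulmxA) mulVmx // mulmx1.
  by rewrite -(mulmxA g) tr_conj.
by rewrite /sigmaA /tauA !h1 !h2.
Qed.

Lemma sigma_ut n (B : Vn n) j k : upper_triangular_tuple B -> sigmaA B j k = 0.
Proof.
move=> ut.
have zj : B j 1 0 = 0 by apply: ut.
have zk : B k 1 0 = 0 by apply: ut.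
rewrite /sigmaA /tauA /t1 /t2 /mxtrace.
rewrite !big_ord_recl !big_ord0 !mxE !big_ord_recl !big_ord0 /=.
set o := (lift ord0 ord0).
have -> : o = 1 by apply: val_inj.
rewrite zj zk.
have h2 : (2 : CC) != 0 by rewrite pnatr_eq0.
set a := B j 0 0. set c := B j 1 1. set d := B k 0 0. set f := B k 1 1.
by field.
Qed.

Theorem proposition2p5 (n : nat) (hn : (2 <= n)%N) (A : Vn n) :
  (exists B : Vn n, upper_triangular_tuple B /\ similar_tuple A B) ->
  forall j k : 'I_n, j != k -> sigmaA A j k = 0.
Proof.
move=> [B [ut [g [gu eB]]]] j k _; subst B.
rewrite -(@sigma_inv n g A j k gu); exact: (@sigma_ut n _ j k ut).
Qed.
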